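(* For every instance of DCIC there exists a threshold $\tau\ge 0$ such that, for every agent utility distribution and every best response of the agent, the SPMI with threshold $\tau$ yields principal's expected utility, excluding the delegation cost, of at least $\frac12\,\mathbb E\big[\max_{i\in[n]}(X_i-c_i)^+\big]$.
   Context: Delegated choice with inspection cost (DCIC). There are $n$ alternatives indexed by $[n]=\{1,\dots,n\}$. Each alternative $i$ has a principal's utility $X_i\ge 0$ and an agent's utility $Y_i\ge 0$; the pairs $(X_i,Y_i)$, $i\in[n]$, are mutually independent random vectors (with $X_i$ and $Y_i$ possibly dependent); the principal knows the distributions of the $X_i$. Alternative $i$ has a deterministic inspection cost $c_i\ge 0$. The SPMI (single-proposal mechanism with inspection) with threshold $\tau$ is the delegating mechanism with signal set $[n]\cup\{\perp\}$: the agent observes all $(X_i,Y_i)$ and sends a signal; on signal $j\in[n]$ the principal inspects $j$ (paying $c_j$) and selects $j$ iff $X_j-c_j\ge\tau$ (otherwise selects nothing); on signal $\perp$ nothing is inspected or selected. The agent's utility is $Y_k$ if $k$ is selected and $0$ if nothing is selected; he sends a signal maximizing it, breaking ties in favor of the principal (among signals giving him equal utility he sends one maximizing the principal's realized utility $\sum_i(\mathbf A_iX_i-\mathbf I_ic_i)$, where $\mathbf A_i,\mathbf I_i$ indicate selection/inspection of $i$). $(z)^+=\max(z,0)$. *)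

(* Defs.v *)
From HB Require Import structures.
From mathcomp Require Import all_boot all_order all_algebra.
From mathcomp Require Import all_classical all_reals all_analysis.
Set Implicit Arguments. Unset Strict Implicit. Unset Printing Implicit Defensive.
Import Order.TTheory GRing.Theory Num.Theory.
Local Open Scope classical_set_scope.
Local Open Scope ring_scope.

Definition pairs_independent (R : realType) (d : measure_display)
  (Omega : measurableType d) (P : probability Omega R) (n : nat)
  (X Y : 'I_n -> Omega -> R) : Prop :=
  forall (J : {set 'I_n}) (B : 'I_n -> set (R * R)%type),
    (forall i, measurable (B i)) ->
    P (\big[setI/setT]_(i in J) [set w | B i (X i w, Y i w)])
    = (\prod_(i in J) P [set w | B i (X i w, Y i w)])%E.

(* SPMI with threshold tau. A signal is [Some j] (propose j) or [None] (perp).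
   Alternative j is selected iff signal j is sent and X_j - c_j >= tau. *)
Definition spmi_selects (R : realType) (n : nat) (c : 'I_n -> R) (tau : R)
  (x : 'I_n -> R) (j : 'I_n) : bool := tau <= x j - c j.

Definition spmi_agent_util (R : realType) (n : nat) (c : 'I_n -> R) (tau : R)
  (x y : 'I_n -> R) (s : option 'I_n) : R :=
  match s with
  | Some j => if spmi_selects c tau x j then y j else 0
  | None => 0
  end.

(* principal's realized utility sum_i (A_i X_i - I_i c_i) for a signal *)
Definition spmi_principal_util (R : realType) (n : nat) (c : 'I_n -> R) (tau : R)
  (x : 'I_n -> R) (s : option 'I_n) : R :=
  match s with
  | Some j => (if spmi_selects c tau x j then x j else 0) - c j
  | None => 0
  end.

Definition spmi_best_response (R : realType) (d : measure_display)
  (Omega : measurableType d) (n : nat) (c : 'I_n -> R) (tau : R)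
  (X Y : 'I_n -> Omega -> R) (s : Omega -> option 'I_n) : Prop :=
  forall w (s' : option 'I_n),
    let x := fun i => X i w in let y := fun i => Y i w in
    spmi_agent_util c tau x y s' <= spmi_agent_util c tau x y (s w) /\
    (spmi_agent_util c tau x y s' = spmi_agent_util c tau x y (s w) ->
     spmi_principal_util c tau x s' <= spmi_principal_util c tau x (s w)).

(* Main.v *)
Require Import Defs.
From HB Require Import structures.
From mathcomp Require Import all_boot all_order all_algebra.
From mathcomp Require Import all_classical all_reals all_analysis.
From mathcomp Require Import measurable_realfun lra ring.
Import Order.TTheory GRing.Theory Num.Theory.
Import numFieldNormedType.Exports.
Local Open Scope classical_set_scope.
Local Open Scope ring_scope.

Lemma pointwise_bound (R : realType) (n : nat) (c : 'I_n -> R) (tau : R)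
  (x y : 'I_n -> R) (s : option 'I_n) :
  0 <= tau -> (forall i, 0 <= y i) ->
  (forall s', spmi_agent_util c tau x y s' <= spmi_agent_util c tau x y s /\
    (spmi_agent_util c tau x y s' = spmi_agent_util c tau x y s ->
     spmi_principal_util c tau x s' <= spmi_principal_util c tau x s)) ->
  (if [exists j, tau <= x j - c j] then tau else 0) +
  \sum_(i < n) Num.max (x i - c i - tau) 0 *
     (if [forall j, (j != i) ==> (x j - c j < tau)] then 1 else 0)
  <= spmi_principal_util c tau x s.
Proof.
move=> tau0 y0 br.
set P := spmi_principal_util c tau x s.
have Pj j : tau <= x j - c j -> spmi_principal_util c tau x (Some j) = x j - c j.
  by move=> h; rewrite /spmi_principal_util /spmi_selects h.
have Aj j : tau <= x j - c j -> spmi_agent_util c tau x y (Some j) = y j.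
  by move=> h; rewrite /spmi_agent_util /spmi_selects h.
have key : (exists2 k, tau <= x k - c k & P = x k - c k)
   \/ (forall j, tau <= x j - c j -> x j - c j <= P).
  have [[k sk eqs]|nsel] := pselect (exists2 k, tau <= x k - c k & s = Some k).
    by left; exists k => //; rewrite /P eqs Pj.
  have as0 : spmi_agent_util c tau x y s = 0.
    case: s {br P} nsel => [k|] //= nsel; rewrite /spmi_selects.
    by case: ifP => // hk; exfalso; apply: nsel; exists k.
  right => j hj; have [h1 h2] := br (Some j).
  move: h1 h2; rewrite Aj // as0 => h1 h2.
  have yj : y j = 0 by apply/eqP; rewrite eq_le h1 y0.
  by rewrite -Pj //; apply: h2.
have term0 i : x i - c i < tau -> Num.max (x i - c i - tau) 0 = 0.
  by move=> h; apply/max_idPr; rewrite subr_le0 ltW.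
have [/existsP [j hj]|nA] := boolP [exists j, tau <= x j - c j]; last first.
  rewrite add0r big1; last first.
    move=> i _; rewrite term0 ?mul0r//; rewrite ltNge; apply/negP => h.
    by apply: (negP nA); apply/existsP; exists i.
  have [h1 h2] := br None.
  have as0 : spmi_agent_util c tau x y s = 0.
    case: s {br h1 h2 P key} => [k|] //=; rewrite /spmi_selects.
    case: ifP => // hk; exfalso; apply: (negP nA); apply/existsP; by exists k.
  by have := h2 (esym as0).
have ptau : tau <= P.
  case: key => [[k hk ->]|h] //; exact: le_trans hj (h j hj).
have [[i /andP [hi /forallP hoth]]|none] :=
  pselect (exists i, (tau <= x i - c i) && [forall j, (j != i) ==> (x j - c j < tau)]).
  rewrite (bigD1 i)//= big1; last first.
    move=> k hk; have [hkA|hkA] := leP tau (x k - c k).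
      have := hoth k; rewrite hk /= => hlt.
      by exfalso; move: hkA; rewrite leNgt hlt.
    by rewrite term0 ?mul0r.
  have -> : [forall j, (j != i) ==> (x j - c j < tau)] by apply/forallP.
  rewrite mulr1 addr0 max_l ?subr_ge0 // addrC subrK.
  case: key => [[k hk ->]|h]; last exact: h.
  have [->//|ki] := eqVneq k i.
  by have := hoth k; rewrite ki /= => hlt; move: hk; rewrite leNgt hlt.
rewrite big1 ?addr0 //.
move=> i _; have [hiA|hiA] := leP tau (x i - c i); last by rewrite term0 ?mul0r.
case: ifP; last by rewrite mulr0.
by move=> hf; exfalso; apply: none; exists i; rewrite hiA hf.
Qed.


Import HBNNSimple.

Lemma le_integral_nm d (T : measurableType d) (R : realType)
  (mu : {measure set T -> \bar R}) (f g : T -> \bar R) :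
  (forall x, (0 <= f x)%E) -> (forall x, (f x <= g x)%E) ->
  (\int[mu]_x f x <= \int[mu]_x g x)%E.
Proof.
move=> f0 fg; have g0 x : (0 <= g x)%E by exact: le_trans (f0 x) (fg x).
rewrite !ge0_integralTE//.
apply: ereal_sup_le => _ [h hf <-]; exists h => //= x.
exact: le_trans (hf x) (fg x).
Qed.

Lemma integral_mrestr_nnsfun d (T : measurableType d) (R : realType)
  (m : {measure set T -> \bar R}) (B : set T) (mB : measurable B)
  (h : {nnsfun T >-> R}) :
  (\int[mrestr m mB]_(x in setT) (h x)%:E = \int[m]_(x in B) (h x)%:E)%E.
Proof.
under [LHS]eq_integral do rewrite fimfunE -fsumEFin//.
rewrite [LHS]ge0_integral_fsum//; last 2 first.
  - by move=> r; exact/measurable_EFinP/measurableT_comp.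
  - by move=> n x _; rewrite EFinM nnfun_muleindic_ge0.
under [RHS]eq_integral do rewrite fimfunE -fsumEFin//.
rewrite [RHS]ge0_integral_fsum//; last 2 first.
  - by move=> r; exact/measurable_EFinP/measurableT_comp.
  - by move=> n x _; rewrite EFinM nnfun_muleindic_ge0.
apply: eq_fsbigr => r _; rewrite !integralZl_indic_nnsfun// !integral_indic//=.
by rewrite /mrestr setIT.
Qed.

Lemma integral_mrestr d (T : measurableType d) (R : realType)
  (m : {measure set T -> \bar R}) (B : set T) (mB : measurable B)
  (f : T -> \bar R) : measurable_fun setT f -> (forall x, (0 <= f x)%E) ->
  (\int[mrestr m mB]_(x in setT) f x = \int[m]_(x in B) f x)%E.
Proof.
move=> mf f0; pose f_ := nnsfun_approx measurableT mf.
transitivity (limn (fun n => \int[mrestr m mB]_(x in setT) (f_ n x)%:E))%E.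
  rewrite -monotone_convergence//=.
  - apply: eq_integral => x /[!inE] xD; apply/esym/cvg_lim => //=.
    exact: cvg_nnsfun_approx.
  - by move=> n; apply: measurableT_comp => //.
  - by move=> n x _; rewrite lee_fin.
  - by move=> x _ a b ab; rewrite lee_fin//; exact/lefP/nd_nnsfun_approx.
rewrite (_ : \int[m]_(x in B) _ =
    limn (fun n => \int[m]_(x in B) (f_ n x)%:E))%E; last first.
  rewrite -monotone_convergence//=.
  - apply: eq_integral => x /[!inE] xD; apply/esym/cvg_lim => //.
    exact: cvg_nnsfun_approx.
  - by move=> n; apply/measurable_EFinP/measurable_funTS.
  - by move=> n x _; rewrite lee_fin.
  - by move=> x _ a b ab; rewrite lee_fin//; exact/lefP/nd_nnsfun_approx.
by congr (limn _); apply/funext => n /=; rewrite integral_mrestr_nnsfun.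
Qed.

Lemma bigsetI_seqE (T : Type) (I : eqType) (s : seq I) (F : I -> set T) (w : T) :
  (\big[setI/setT]_(j <- s) F j) w <-> (forall j, j \in s -> F j w).
Proof.
elim: s => [|a s IH]; first by rewrite big_nil; split.
rewrite big_cons; split.
  move=> [Fa /IH H] j; rewrite inE => /orP [/eqP ->//|]; exact: H.
move=> H; split; first by apply: H; rewrite inE eqxx.
by apply/IH => j js; apply: H; rewrite inE js orbT.
Qed.

Lemma bigsetIE (T : Type) (I : finType) (J : {set I}) (F : I -> set T) :
  \big[setI/setT]_(j in J) F j = [set w | forall j, j \in J -> F j w].
Proof.
rewrite big_mkcond; apply/seteqP; split => w /=.
  move=> /bigsetI_seqE H j jJ; have := H j; rewrite jJ; apply.
  by rewrite mem_index_enum.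
move=> H; apply/bigsetI_seqE => j _; case: ifP => // jJ; exact: H.
Qed.


Lemma Bs_measurable (R : realType) (d : measure_display) (Omega : measurableType d)
  (n : nat) (X : 'I_n -> Omega -> R) (i : 'I_n) (E : 'I_n -> set R) :
  (forall j, measurable_fun setT (X j)) -> (forall j, measurable (E j)) ->
  measurable [set w | forall j, j != i -> E j (X j w)].
Proof.
move=> mX mE.
have -> : [set w | forall j, j != i -> E j (X j w)] =
  \big[setI/setT]_(j in [set~ i]%SET) (X j @^-1` E j).
  rewrite bigsetIE; apply/seteqP; split => w /= H j.
    by rewrite in_setC1; exact: H.
  by move=> ji; apply: H; rewrite in_setC1.
apply: (big_ind measurable) => //; first exact: measurableI.
move=> j _; rewrite -[X j @^-1` E j]setTI; exact: (mX j).
Qed.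

Lemma indep_split (R : realType) (d : measure_display) (Omega : measurableType d)
  (P : probability Omega R) (n : nat) (X Y : 'I_n -> Omega -> R)
  (i : 'I_n) (E : 'I_n -> set R) :
  (forall j, measurable (E j)) -> pairs_independent P X Y ->
  P (X i @^-1` E i `&` [set w | forall j, j != i -> E j (X j w)]) =
  (P (X i @^-1` E i) * P [set w | forall j, j != i -> E j (X j w)])%E /\
  P [set w | forall j, j != i -> E j (X j w)] =
  (\prod_(j in [set~ i]%SET) P (X j @^-1` E j))%E.
Proof.
move=> mE hind.
have mB j : measurable (E j `*` @setT R) by apply: measurableX.
have hT := hind [set: 'I_n]%SET (fun j => E j `*` setT) mB.
have hC := hind [set~ i]%SET (fun j => E j `*` setT) mB.
rewrite !bigsetIE in hT hC.
have eqj j : [set w | (E j `*` setT) (X j w, Y j w)] = X j @^-1` E j.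
  by apply/seteqP; split => w /=; [case|split].
have eC : [set w | forall j, j \in [set~ i]%SET -> [set w0 | (E j `*` setT) (X j w0, Y j w0)] w] =
  [set w | forall j, j != i -> E j (X j w)].
  apply/seteqP; split => w /= H j; rewrite ?in_setC1 => ji.
    by have [] := H j; rewrite ?in_setC1.
  by split => //; apply: H.
have eT : [set w | forall j, j \in [set: 'I_n]%SET -> [set w0 | (E j `*` setT) (X j w0, Y j w0)] w] =
  X i @^-1` E i `&` [set w | forall j, j != i -> E j (X j w)].
  apply/seteqP; split => w /=.
    move=> H; split; first by have [] := H i ltac:(by rewrite inE).
    by move=> j _; have [] := H j ltac:(by rewrite inE).
  move=> [Hi H] j _; split => //; have [->//|ji] := eqVneq j i; exact: H.
rewrite eC in hC; rewrite eT in hT.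
have hC' : P [set w | forall j, j != i -> E j (X j w)] =
   (\prod_(j in [set~ i]%SET) P (X j @^-1` E j))%E.
  by rewrite hC; apply: eq_bigr => j _; rewrite eqj.
split => //.
rewrite hT hC' (bigD1 i) ?inE //=; rewrite eqj; congr (_ * _)%E.
apply: eq_big => [j|j _]; first by rewrite !inE.
by congr (P _); apply/seteqP; split => w /=; [case|].

Qed.

Lemma indep_factor (R : realType) (d : measure_display) (Omega : measurableType d)
  (P : probability Omega R) (n : nat) (X Y : 'I_n -> Omega -> R)
  (mu : 'I_n -> probability R R) (i : 'I_n) (g : R -> R) (E : 'I_n -> set R) :
  (forall j, measurable_fun setT (X j)) -> (forall j, measurable (E j)) ->
  pairs_independent P X Y ->
  (forall j A, measurable A -> P (X j @^-1` A) = mu j A) ->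
  measurable_fun setT g -> (forall x, 0 <= g x) ->
  (\int[P]_(w in [set w | forall j, j != i -> E j (X j w)]) (g (X i w))%:E =
   P [set w | forall j, j != i -> E j (X j w)] * \int[mu i]_x (g x)%:E)%E.
Proof.
move=> mX mE hind hdist mg g0.
set Bs := [set w | forall j, j != i -> E j (X j w)].
have mBs : measurable Bs by exact: Bs_measurable.
have mgX : measurable_fun setT (fun w => (g (X i w))%:E).
  by apply/measurable_EFinP; exact: measurableT_comp.
rewrite -(@integral_mrestr _ _ _ P _ mBs _ mgX); last by move=> w; rewrite lee_fin.
have := ge0_integral_pushforward (mX i) (mrestr P mBs) (f := EFin \o g) measurableT.
rewrite preimage_setT => <- //; last first.
  - by move=> y _; rewrite /= lee_fin.
  - exact/measurable_EFinP.
have PB0 : (0 <= fine (P Bs))%R by apply: fine_ge0.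
have PBfin : P Bs \is a fin_num by apply: fin_num_measure.
rewrite (eq_measure_integral (mscale (NngNum PB0) (mu i))); last first.
  move=> A mA _.
  change (P (X i @^-1` A `&` Bs) = (fine (P Bs))%:E * mu i A)%E; rewrite fineK //.
  pose E' := fun j => if j == i then A else E j.
  have mE' j : measurable (E' j) by rewrite /E'; case: ifP.
  have [h1 _] := @indep_split _ _ _ P _ X Y i E' mE' hind.
  have eB : [set w | forall j, j != i -> E' j (X j w)] = Bs.
    apply/seteqP; split => w /= H j ji; have := H j ji; rewrite /E' (negbTE ji) //.
  rewrite eB /E' eqxx in h1; rewrite h1 hdist // muleC //.
rewrite ge0_integral_mscale //=; last by move=> x _; rewrite lee_fin.
  by rewrite fineK.
exact/measurable_EFinP.
Qed.


Definition mth (R : realType) (n : nat) (c : 'I_n -> R)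
  (mu : 'I_n -> probability R R) (tau : R) (i : 'I_n) : \bar R :=
  (\int[mu i]_x (Num.max (x - c i - tau) 0)%:E)%E.
Arguments mth {R n}.

Lemma Eset_measurable (R : realType) (a t : R) :
  measurable [set x : R | x - a < t].
Proof.
have -> : [set x : R | x - a < t] = `]-oo, t + a[%classic.
  by apply/seteqP; split => x /=; rewrite in_itv /= ltrBlDr.
exact: measurable_itv.
Qed.

Lemma Jset_measurable (R : realType) (d : measure_display) (Omega : measurableType d)
  (n : nat) (X : 'I_n -> Omega -> R) (J : {set 'I_n}) (E : 'I_n -> set R) :
  (forall j, measurable_fun setT (X j)) -> (forall j, measurable (E j)) ->
  measurable [set w | forall j, j \in J -> E j (X j w)].
Proof.
move=> mX mE; rewrite -bigsetIE.
apply: (big_ind measurable) => //; first exact: measurableI.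
move=> j _; have := mX j measurableT _ (mE j); by rewrite setTI.
Qed.

Lemma mg (R : realType) (a : R) : measurable_fun setT (fun x : R => Num.max (x - a) 0).
Proof. apply: measurable_maxr => //; apply: measurable_funB => //. Qed.

Lemma bigmax_ge0 (R : realType) (n : nat) (F : 'I_n -> R) :
  0 <= \big[Num.max/0]_(i < n) Num.max (F i) 0.
Proof. by apply: (big_ind (fun v => 0 <= v)) => [|a b ha hb|i _]; rewrite ?le_max ?ha ?lexx ?orbT. Qed.

Lemma sum_max_ge0 (R : realType) (n : nat) (F : 'I_n -> R) :
  0 <= \sum_(i < n) Num.max (F i) 0.
Proof. by apply: sumr_ge0 => i _; rewrite le_max lexx orbT. Qed.

Lemma bigmax_le_sum (R : realType) (n : nat) (Z : 'I_n -> R) (tau : R) :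
  0 <= tau ->
  \big[Num.max/0]_(i < n) Num.max (Z i) 0 <= tau + \sum_(i < n) Num.max (Z i - tau) 0.
Proof.
move=> tau0.
apply: (big_ind (fun v => v <= tau + _)).
- by rewrite addr_ge0 // sum_max_ge0.
- by move=> a b ha hb; rewrite ge_max ha hb.
move=> i _.
have h1 : Num.max (Z i) 0 <= tau + Num.max (Z i - tau) 0.
  rewrite ge_max; apply/andP; split; last by rewrite addr_ge0 // le_max lexx orbT.
  by rewrite -lerBlDl le_max lexx.
apply: le_trans h1 _; rewrite (bigD1 i) //= addrA lerDl.
by apply: sumr_ge0 => j _; rewrite le_max lexx orbT.
Qed.

Lemma mg2 (R : realType) (a b : R) : measurable_fun setT (fun x : R => Num.max (x - a - b) 0).
Proof. apply: measurable_maxr => //; apply: measurable_funB => //; apply: measurable_funB => //. Qed.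

Lemma Ef_eq (R : realType) (d : measure_display) (Omega : measurableType d)
  (P : probability Omega R) (n : nat) (X Y : 'I_n -> Omega -> R)
  (mu : 'I_n -> probability R R) (c : 'I_n -> R) (tau : R) (i : 'I_n) :
  (forall j, measurable_fun setT (X j)) -> pairs_independent P X Y ->
  (forall j A, measurable A -> P (X j @^-1` A) = mu j A) ->
  (\int[P]_w (Num.max (X i w - c i - tau) 0)%:E = mth c mu tau i)%E.
Proof.
move=> mX hind hdist.
have := @indep_factor _ _ _ P _ X Y mu i (fun x => Num.max (x - c i - tau) 0)
  (fun _ => setT) mX (fun _ => measurableT) hind hdist (mg2 _ _ _)
  (fun x => ltac:(by rewrite le_max lexx orbT)).
rewrite (_ : [set w | forall j, j != i -> setT (X j w)] = setT); last first.
  by apply/seteqP; split.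
by rewrite probability_setT mul1e.
Qed.

Lemma partA (R : realType) (d : measure_display) (Omega : measurableType d)
  (P : probability Omega R) (n : nat) (X Y : 'I_n -> Omega -> R)
  (mu : 'I_n -> probability R R) (c : 'I_n -> R) (tau : R) :
  0 <= tau ->
  (forall j, measurable_fun setT (X j)) -> pairs_independent P X Y ->
  (forall j A, measurable A -> P (X j @^-1` A) = mu j A) ->
  (\int[P]_w (\big[Num.max/0]_(i < n) Num.max (X i w - c i) 0)%:E
    <= tau%:E + \sum_(i < n) mth c mu tau i)%E.
Proof.
move=> tau0 mX hind hdist.
apply: le_trans (@le_integral_nm _ _ _ P _
   (fun w => (tau + \sum_(i<n) Num.max (X i w - c i - tau) 0)%:E) _ _) _.
- by move=> w; rewrite lee_fin; exact: bigmax_ge0.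
- by move=> w; rewrite lee_fin; exact: bigmax_le_sum.
have mfi i : measurable_fun setT (fun w => (Num.max (X i w - c i - tau) 0)%:E).
  by apply/measurable_EFinP; apply: measurableT_comp (mg2 _ _ _) (mX i).
under eq_integral do rewrite EFinD -sumEFin.
have h1 : forall w, setT w -> (0 <= \sum_(i < n) (Num.max (X i w - c i - tau) 0)%:E)%E.
  by move=> w _; apply: sume_ge0 => i _; rewrite lee_fin le_max lexx orbT.
have h2 : measurable_fun setT (fun w => \sum_(i < n) (Num.max (X i w - c i - tau) 0)%:E)%E.
  by apply: emeasurable_sum => i; exact: mfi.
have h3 : forall w : Omega, setT w -> (0 <= tau%:E)%E.
  by move=> ? ?; rewrite lee_fin.
rewrite ge0_integralD //.
rewrite integral_cst //.
set t := (X in (tau%:E * X)%E).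
have -> : t = 1%E by exact: probability_setT.
rewrite mule1.
rewrite ge0_integral_sum //; last first.
  by move=> i w _; rewrite lee_fin le_max lexx orbT.
rewrite le_eqVlt; apply/orP; left; apply/eqP; congr (_ + _)%E.
by apply: eq_bigr => i _; exact: (@Ef_eq _ _ _ P _ X Y mu c tau i mX hind hdist).
Qed.

Definition Bi (R : realType) (d : measure_display) (Omega : measurableType d)
  (n : nat) (X : 'I_n -> Omega -> R) (c : 'I_n -> R) (tau : R) (i : 'I_n) : set Omega :=
  [set w | forall j, j != i -> X j w - c j < tau].
Arguments Bi {R d Omega n}.
Definition Ball (R : realType) (d : measure_display) (Omega : measurableType d)
  (n : nat) (X : 'I_n -> Omega -> R) (c : 'I_n -> R) (tau : R) : set Omega :=
  [set w | forall j, X j w - c j < tau].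
Arguments Ball {R d Omega n}.

Lemma indic01 (T : Type) (R : realType) (A : set T) (w : T) :
  (0 <= (\1_A w : R))%R.
Proof. by rewrite indicE; case: (w \in A). Qed.

Lemma partB (R : realType) (d : measure_display) (Omega : measurableType d)
  (P : probability Omega R) (n : nat) (X Y : 'I_n -> Omega -> R)
  (mu : 'I_n -> probability R R) (c : 'I_n -> R) (tau : R)
  (s : Omega -> option 'I_n) :
  0 <= tau ->
  (forall j, measurable_fun setT (X j)) -> (forall i w, 0 <= Y i w) ->
  pairs_independent P X Y ->
  (forall j A, measurable A -> P (X j @^-1` A) = mu j A) ->
  spmi_best_response c tau X Y s ->
  (tau%:E * (1 - P (Ball X c tau)) + \sum_(i < n) (P (Bi X c tau i) * mth c mu tau i)
    <= \int[P]_w (spmi_principal_util c tau (fun i => X i w) (s w))%:E)%E.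
Proof.
move=> tau0 mX Y0 hind hdist br.
have mE j : measurable [set x : R | x - c j < tau] by exact: Eset_measurable.
have mB : measurable (Ball X c tau).
  have := @Jset_measurable _ _ _ _ X [set: 'I_n]%SET _ mX mE.
  rewrite (_ : [set w | _] = Ball X c tau) //; apply/seteqP; split => w /= H j.
    by apply: H; rewrite inE.
  by move=> _; exact: (H j).
have mBi i : measurable (Bi X c tau i).
  have := @Jset_measurable _ _ _ _ X [set~ i]%SET _ mX mE.
  rewrite (_ : [set w | _] = Bi X c tau i) //; apply/seteqP; split => w /= H j.
    by move=> ji; apply: H; rewrite !inE.
  by rewrite !inE => ji; exact: (H j ji).
pose G := fun w => (tau * \1_(~` Ball X c tau) w +
  \sum_(i < n) Num.max (X i w - c i - tau) 0 * \1_(Bi X c tau i) w)%:E.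
apply: le_trans (@le_integral_nm _ _ _ P G _ _ _) ; last 2 first.
- move=> w; rewrite lee_fin addr_ge0 ?mulr_ge0 ?indic01 //.
  by apply: sumr_ge0 => i _; rewrite mulr_ge0 ?indic01 // le_max lexx orbT.
- move=> w; rewrite lee_fin.
  have eB : \1_(~` Ball X c tau) w = (if [exists j, tau <= X j w - c j] then 1 else 0 : R).
    rewrite indicE (_ : (w \in _) = [exists j, tau <= X j w - c j]); first by case: ifP.
    apply/idP/idP.
      rewrite in_setE /= => nB; case: (boolP [exists j, tau <= X j w - c j]) => // /existsPn H.
      by exfalso; apply: nB => j; rewrite ltNge; apply: H.
    move=> /existsP [j hj]; rewrite in_setE /= => Bw.
    by have := Bw j; rewrite ltNge hj.
  have eBi i : \1_(Bi X c tau i) w =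
      (if [forall j, (j != i) ==> (X j w - c j < tau)] then 1 else 0 : R).
    rewrite indicE (_ : (w \in _) = [forall j, (j != i) ==> (X j w - c j < tau)]); first by case: ifP.
    apply/idP/idP.
      rewrite in_setE /= => H; apply/forallP => j; apply/implyP; exact: H.
    by move=> /forallP H; rewrite in_setE /= => j ji; have := H j; rewrite ji.
  rewrite eB; under eq_bigr do rewrite eBi.
  have := @pointwise_bound R n c tau (fun i => X i w) (fun i => Y i w) (s w) tau0
    (fun i => Y0 i w) (br w).
  by case: ifP; rewrite ?mulr1 ?mulr0.
rewrite le_eqVlt; apply/orP; left; apply/eqP; apply/esym.
have mfi i : measurable_fun setT (fun w => (Num.max (X i w - c i - tau) 0)%:E).
  by apply/measurable_EFinP; apply: measurableT_comp (mg2 _ _ _) (mX i).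
have mfB i : measurable_fun setT (fun w =>
    (Num.max (X i w - c i - tau) 0 * \1_(Bi X c tau i) w)%:E).
  apply/measurable_EFinP; apply: measurable_funM; last exact: measurable_indic.
  exact: measurableT_comp (mg2 _ _ _) (mX i).
have h1 : forall w, setT w -> (0 <= \sum_(i < n)
    (Num.max (X i w - c i - tau) 0 * \1_(Bi X c tau i) w)%:E)%E.
  by move=> w _; apply: sume_ge0 => i _; rewrite lee_fin mulr_ge0 ?indic01 // le_max lexx orbT.
have h2 : measurable_fun setT (fun w => \sum_(i < n)
    (Num.max (X i w - c i - tau) 0 * \1_(Bi X c tau i) w)%:E)%E.
  by apply: emeasurable_sum => i; exact: mfB.
have h3 : forall w, setT w -> (0 <= (tau * \1_(~` Ball X c tau) w)%:E)%E.
  by move=> ? ?; rewrite lee_fin mulr_ge0 ?indic01.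
have h4 : measurable_fun setT (fun w => (tau * \1_(~` Ball X c tau) w)%:E).
  apply/measurable_EFinP; apply: measurable_funM => //; apply: measurable_indic.
  exact: measurableC.
rewrite /G; under eq_integral do rewrite EFinD -sumEFin.
rewrite ge0_integralD //; congr (_ + _)%E.
  under eq_integral do rewrite EFinM.
  have k1 : forall w, setT w -> (0 <= (\1_(~` Ball X c tau) w)%:E)%E.
    by move=> w hw; rewrite lee_fin indicE; case: (_ \in _).
  have k2 : (0 <= tau%:E)%E by rewrite lee_fin.
  have k3 : measurable_fun setT (fun w => (\1_(~` Ball X c tau) w : R)%:E).
    by apply/measurable_EFinP; apply: measurable_indic; exact: measurableC.
  rewrite ge0_integralZl //.
  rewrite integral_indic //; last exact: measurableC.
  rewrite setIT; congr (_ * _)%E; exact: probability_setC.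
rewrite ge0_integral_sum //; last first.
  by move=> i w _; rewrite lee_fin mulr_ge0 ?indic01 // le_max lexx orbT.
apply: eq_bigr => i _.
have H := @indep_factor _ _ _ P _ X Y mu i (fun x => Num.max (x - c i - tau) 0)
  (fun j => [set x | x - c j < tau]) mX mE hind hdist (mg2 _ _ _)
  (fun x => ltac:(by rewrite le_max lexx orbT)).
transitivity (\int[P]_(w in Bi X c tau i) (Num.max (X i w - c i - tau) 0)%:E)%E.
  rewrite [RHS]integral_mkcond; apply: eq_integral => w _.
  by rewrite patchE indicE; case: ifP => _ /=; rewrite ?mulr1 ?mulr0.
exact: H.
Qed.


Lemma lip_cont (R : realType) (f : R -> R) (k : R) : 0 <= k ->
  (forall x y, `|f x - f y| <= k * `|x - y|) -> continuous f.
Proof.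
move=> k0 H x; apply/cvgrPdist_lt => e e0.
have ek : 0 < e / (k + 1) by rewrite divr_gt0 // ltr_wpDl.
have hn := @cvgr_dist_lt _ _ _ (nbhs x) _ id x cvg_id _ ek.
near=> y.
have hy : `|x - y| < e / (k + 1) by near: y; exact: hn.
apply: le_lt_trans (H x y) _.
apply: le_lt_trans (_ : k * `|x - y| <= (k + 1) * `|x - y|) _.
  by rewrite ler_wpM2r // lerDl.
by rewrite mulrC -ltr_pdivlMr ?ltr_wpDl.
Unshelve. all: by end_near.
Qed.

Lemma max0_lip (R : realType) (x y : R) :
  `|Num.max x 0 - Num.max y 0| <= `|x - y|.
Proof.
have h1 := ler_norm (x - y).
have h2 : -(x - y) <= `|x - y| by rewrite -normrN ler_norm.
rewrite ler_norml; case: (leP x 0) => hx; case: (leP y 0) => hy;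
  by apply/andP; split; lra.
Qed.

Lemma fixed_point (R : realType) (F : R -> R) (k : R) :
  0 <= k -> 0 <= F 0 ->
  (forall t t', 0 <= t -> t <= t' -> F t' <= F t /\ F t <= F t' + k * (t' - t)) ->
  exists tau, 0 <= tau /\ F tau = tau.
Proof.
move=> k0 F0 HF.
have lipF x y : 0 <= x -> 0 <= y -> `|F x - F y| <= k * `|x - y|.
  move=> x0 y0; wlog xy : x y x0 y0 / x <= y.
    move=> W; case: (leP x y) => h; first exact: W.
    by rewrite distrC [`|x - y|]distrC; apply: W => //; exact: ltW.
  have [h1 h2] := HF x y x0 xy.
  rewrite (ger0_norm (x := F x - F y)) ?subr_ge0 // (distrC x y) ger0_norm ?subr_ge0 //.
  by rewrite lerBlDl.
pose H t := t - F (Num.max t 0).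
have Hc : continuous H.
  apply: (@lip_cont _ _ (k + 1)); first by rewrite addr_ge0.
  move=> x y; rewrite /H.
  have -> : x - F (Num.max x 0) - (y - F (Num.max y 0)) =
     (x - y) + (F (Num.max y 0) - F (Num.max x 0)) by ring.
  apply: le_trans (ler_normD _ _) _.
  rewrite mulrDl mul1r addrC lerD //.
  apply: le_trans (lipF _ _ _ _) _; rewrite ?le_max ?lexx ?orbT //.
  by rewrite ler_wpM2l // distrC max0_lip.
have Hw : {within `[0, F 0], continuous H} by apply: continuous_subspaceT.
have side : Num.min (H 0) (H (F 0)) <= 0 <= Num.max (H 0) (H (F 0)).
  rewrite /H (max_idPr (lexx 0)) (max_idPl F0) sub0r; apply/andP; split.
    by rewrite ge_min lerNl oppr0 F0.
  rewrite le_max; apply/orP; right; rewrite subr_ge0.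
  by have [] := HF 0 (F 0) (lexx 0) F0.
have [tau tau_in Htau] := @IVT _ H 0 (F 0) 0 F0 Hw side.
move: tau_in; rewrite in_itv /= => /andP [t0 _].
exists tau; split => //; move: Htau; rewrite /H (max_idPl t0).
by move=> h; apply/esym/eqP; rewrite -subr_eq0 h.
Qed.


Local Opaque mth.

Lemma mth_ge0 (R : realType) (n : nat) (c : 'I_n -> R)
  (mu : 'I_n -> probability R R) t i : (0 <= mth c mu t i)%E.
Proof. by apply: integral_ge0 => x _; rewrite lee_fin le_max lexx orbT. Qed.
Arguments mth_ge0 {R n}.

Lemma max_mono (R : realType) (a b : R) : a <= b -> Num.max a 0 <= Num.max b 0.
Proof. by move=> ab; rewrite ge_max !le_max ab lexx !orbT. Qed.

Lemma max_sub (R : realType) (a e : R) : 0 <= e -> Num.max a 0 <= Num.max (a - e) 0 + e.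
Proof.
move=> e0; rewrite ge_max; apply/andP; split.
  by rewrite -lerBlDr le_max lexx.
by rewrite addr_ge0 // le_max lexx orbT.
Qed.

Lemma mth_mono (R : realType) (n : nat) (c : 'I_n -> R)
  (mu : 'I_n -> probability R R) t t' i : t <= t' ->
  (mth c mu t' i <= mth c mu t i)%E /\
  (mth c mu t i <= mth c mu t' i + (t' - t)%:E)%E.
Proof.
move=> tt'; have m1 := @mg2 R (c i) t; have m2 := @mg2 R (c i) t'.
split.
  apply: ge0_le_integral => //.
  - by move=> x _; rewrite lee_fin le_max lexx orbT.
  - exact/measurable_EFinP.
  - exact/measurable_EFinP.
  by move=> x _; rewrite lee_fin; apply: max_mono; rewrite lerB.
apply: le_trans (_ : _ <= \int[mu i]_x ((Num.max (x - c i - t') 0)%:E + (t' - t)%:E))%E _.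
  apply: ge0_le_integral => //.
  - by move=> x _; rewrite lee_fin le_max lexx orbT.
  - exact/measurable_EFinP.
  - by apply: emeasurable_funD => //; exact/measurable_EFinP.
  move=> x _; rewrite -EFinD lee_fin.
  have -> : x - c i - t' = x - c i - t - (t' - t) by ring.
  by apply: max_sub; rewrite subr_ge0.
rewrite ge0_integralD //.
- rewrite integral_cst //; set tt := (X in (_ * X)%E); have -> : tt = 1%E by exact: probability_setT.
  by rewrite mule1.
- by move=> x _; rewrite lee_fin le_max lexx orbT.
- exact/measurable_EFinP.
- by move=> x _; rewrite lee_fin subr_ge0.
Qed.

Arguments mth_mono {R n}.

Lemma pos_mass (R : realType) (mu0 : probability R R) (a : R) :
  exists m : nat, (0 < mu0 [set x : R | (x - a < m%:R)%R])%E.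
Proof.
have [//|H] := pselect (exists m : nat, (0 < mu0 [set x : R | (x - a < m%:R)%R])%E).
exfalso.
have H0 m : mu0 [set x : R | (x - a < m%:R)%R] = 0%E.
  apply/eqP; rewrite eq_le measure_ge0 andbT leNgt; apply/negP => h.
  by apply: H; exists m.
have := @measure_sigma_subadditive _ _ _ mu0 setT (fun m : nat => [set x : R | (x - a < m%:R)%R])
  (fun m => Eset_measurable _ _ _) measurableT.
have cov : setT `<=` \bigcup_(m in setT) [set x : R | x - a < m%:R].
  by move=> x _; exists (Num.trunc (x - a)).+1 => //=; exact: truncnS_gt.
move=> /(_ cov); rewrite eseries0; last by move=> i _ _; exact: H0.
set tt := (X in (X <= _)%E); have -> : tt = 1%E by exact: probability_setT.
by rewrite lee_fin ler10.
Qed.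

Lemma choose_tau (R : realType) (n : nat) (c : 'I_n -> R)
  (mu : 'I_n -> probability R R) :
  exists tau : R, 0 <= tau /\
  ((\sum_(i < n) mth c mu tau i = tau%:E)%E \/
   (exists k, mth c mu tau k = +oo%E) /\
   (forall j, (0 < mu j [set x : R | (x - c j < tau)%R])%E)).
Proof.
have [fin|nfin] := boolP ((\sum_(i < n) mth c mu 0 i)%E \is a fin_num).
  have fin0 i : mth c mu 0 i \is a fin_num.
    rewrite ge0_fin_numE ?(mth_ge0 c mu) //; apply: le_lt_trans (_ : _ <= \sum_(i < n) mth c mu 0 i)%E _.
      by rewrite (bigD1 i) //= leeDl //; apply: sume_ge0 => j _; exact: (mth_ge0 c mu).
    by rewrite -ge0_fin_numE // sume_ge0 // => j _; exact: (mth_ge0 c mu).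
  have fint t i : 0 <= t -> mth c mu t i \is a fin_num.
    move=> t0; rewrite ge0_fin_numE ?(mth_ge0 c mu) //.
    apply: le_lt_trans (mth_mono c mu _ _ i t0).1 _.
    by rewrite -ge0_fin_numE ?(mth_ge0 c mu).
  pose F t := \sum_(i < n) fine (mth c mu t i).
  have [tau [tau0 Ftau]] : exists tau, 0 <= tau /\ F tau = tau.
    apply: (@fixed_point _ F n%:R) => //.
      by apply: sumr_ge0 => i _; apply: fine_ge0; exact: (mth_ge0 c mu).
    move=> t t' t0 tt'; have t'0 := le_trans t0 tt'; split.
      apply: ler_sum => i _; apply: fine_le; rewrite ?fint //.
      exact: (mth_mono c mu _ _ i tt').1.
    have -> : n%:R * (t' - t) = \sum_(i < n) (t' - t) by rewrite sumr_const card_ord mulr_natl.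
    rewrite /F -big_split /=; apply: ler_sum => i _.
    rewrite (_ : fine (mth c mu t' i) + (t' - t) = fine (mth c mu t' i + (t' - t)%:E)); last by rewrite [RHS]fineD; [reflexivity|exact: fint|exact: erefl].
    have h := (mth_mono c mu _ _ i tt').2.
    have f2 : (mth c mu t' i + (t' - t)%:E)%E \is a fin_num by rewrite fin_numD fint.
    exact: (fine_le (fint t i t0) f2 h).
  exists tau; split => //; left.
  have -> : tau%:E = (F tau)%:E by rewrite Ftau.
  by rewrite /F -sumEFin; apply: eq_bigr => i _; rewrite (fineK (fint tau i tau0)).
have [k hk] : exists k, mth c mu 0 k = +oo%E.
  have [//|H] := pselect (exists k, mth c mu 0 k = +oo%E).
  exfalso; apply: (negP nfin).
  have fk k : mth c mu 0 k \is a fin_num.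
    rewrite ge0_fin_numE ?(mth_ge0 c mu) // ltey; apply/negP => /eqP h.
    by apply: H; exists k.
  apply: (big_ind (fun v => v \is a fin_num)) => //;
    try (by move=> x y hx hy; rewrite fin_numD hx hy); by move=> i _; exact: fk.
have /choice [m hm] : forall j, exists m : nat,
    (0 < mu j [set x : R | (x - c j < m%:R)%R])%E.
  by move=> j; exact: pos_mass.
pose tau := \sum_(j < n) ((m j)%:R : R).
have tau0 : 0 <= tau by apply: sumr_ge0 => j _; exact: ler0n.
exists tau; split => //; right; split.
  exists k; have h := (mth_mono c mu 0 tau k tau0).2.
  rewrite hk subr0 in h; have := mth_ge0 c mu tau k.
  by case: (mth c mu tau k) h => [r| |].
move=> j; apply: lt_le_trans (hm j) _; apply: le_measure; rewrite ?inE.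
- exact: Eset_measurable.
- exact: Eset_measurable.
move=> x /= h; apply: lt_le_trans h _.
by rewrite /tau (bigD1 j) //= lerDl; apply: sumr_ge0 => i _; exact: ler0n.
Qed.


Local Opaque mth.

Lemma Ball_meas (R : realType) (d : measure_display) (Omega : measurableType d)
  (n : nat) (X : 'I_n -> Omega -> R) (c : 'I_n -> R) (tau : R) :
  (forall j, measurable_fun setT (X j)) -> measurable (Ball X c tau).
Proof.
move=> mX; have mE j : measurable [set x : R | x - c j < tau] by exact: Eset_measurable.
have := @Jset_measurable _ _ _ _ X [set: 'I_n]%SET _ mX mE.
rewrite (_ : [set w | _] = Ball X c tau) //; apply/seteqP; split => w /= H j.
  by apply: H; rewrite inE.
by move=> _; exact: (H j).
Qed.

Lemma Bi_meas (R : realType) (d : measure_display) (Omega : measurableType d)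
  (n : nat) (X : 'I_n -> Omega -> R) (c : 'I_n -> R) (tau : R) i :
  (forall j, measurable_fun setT (X j)) -> measurable (Bi X c tau i).
Proof.
move=> mX; have mE j : measurable [set x : R | x - c j < tau] by exact: Eset_measurable.
have := @Jset_measurable _ _ _ _ X [set~ i]%SET _ mX mE.
rewrite (_ : [set w | _] = Bi X c tau i) //; apply/seteqP; split => w /= H j.
  by move=> ji; apply: H; rewrite !inE.
by rewrite !inE => ji; exact: (H j ji).
Qed.

Theorem mainTheorem8 (R : realType) (n : nat) (c : 'I_n -> R)
  (mu : 'I_n -> probability R R) :
  (forall i, 0 <= c i) ->
  (forall i, mu i [set x : R | 0 <= x] = 1%E) ->
  exists tau : R, 0 <= tau /\
  forall (d : measure_display) (Omega : measurableType d)
         (P : probability Omega R) (X Y : 'I_n -> Omega -> R),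
    (forall i, measurable_fun setT (X i)) ->
    (forall i, measurable_fun setT (Y i)) ->
    (forall i w, 0 <= X i w) ->
    (forall i w, 0 <= Y i w) ->
    (forall i (A : set R), measurable A -> P (X i @^-1` A) = mu i A) ->
    pairs_independent P X Y ->
    forall s : Omega -> option 'I_n,
      spmi_best_response c tau X Y s ->
      ((2%:R)^-1%:E *
         \int[P]_w (\big[Num.max/0]_(i < n) Num.max (X i w - c i) 0)%:E
       <= \int[P]_w (spmi_principal_util c tau (fun i => X i w) (s w))%:E)%E.
Proof.
move=> c0 mu0.
have [tau [tau0 Htau]] := @choose_tau _ _ c mu.
exists tau; split => // d Omega P X Y mX mY X0 Y0 hdist hind s br.
have hA := @partA _ _ _ P _ X Y mu c tau tau0 mX hind hdist.
have hB := @partB _ _ _ P _ X Y mu c tau s tau0 mX Y0 hind hdist br.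
have mB := @Ball_meas _ _ _ _ X c tau mX.
have mBi i := @Bi_meas _ _ _ _ X c tau i mX.
have qle i : (P (Ball X c tau) <= P (Bi X c tau i))%E.
  by apply: le_measure; rewrite ?inE // => w Bw j _; exact: Bw.
set q := P (Ball X c tau) in hB qle.
have qfin : q \is a fin_num by apply: fin_num_measure.
case: Htau => [Hs | [[k hk] hpos]].
  apply: le_trans (_ : _ <= tau%:E)%E _.
    apply: le_trans (lee_wpmul2l _ hA) _; first by rewrite lee_fin invr_ge0.
    by rewrite Hs -EFinD -EFinM lee_fin; lra.
  apply: le_trans _ hB.
  have hq : (q * tau%:E <= \sum_(i < n) (P (Bi X c tau i) * mth c mu tau i))%E.
    rewrite -Hs ge0_sume_distrr; last by move=> i _; exact: mth_ge0.
    by apply: lee_sum => i _; apply: lee_wpmul2r; [exact: mth_ge0 | exact: qle].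
  apply: le_trans (leeD2l _ hq).
  by rewrite -(fineK qfin) -EFinB -!EFinM -EFinD lee_fin; lra.
have PBk : P (Bi X c tau k) =
    (\prod_(j in [set~ k]%SET) P (X j @^-1` [set x : R | (x - c j < tau)%R]))%E :=
  (@indep_split _ _ _ P _ X Y k (fun j => [set x : R | x - c j < tau])
     (fun j => Eset_measurable _ _ _) hind).2.
have Pk : (0 < P (Bi X c tau k))%E.
  rewrite PBk; apply: (big_ind (fun v => 0 < v)%E).
  - exact: lte01.
  - by move=> x y hx hy; exact: mule_gt0.
  - by move=> j _; rewrite hdist; [exact: hpos | exact: Eset_measurable].
have : (+oo <= \int[P]_w (spmi_principal_util c tau (fun i => X i w) (s w))%:E)%E.
  apply: le_trans _ hB.
  have s0 : (0 <= \sum_(i < n | i != k) (P (Bi X c tau i) * mth c mu tau i))%E.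
    by apply: sume_ge0 => i _; apply: mule_ge0; [exact: measure_ge0 | exact: mth_ge0].
  rewrite (bigD1 k) //= hk (muleC _ +oo%E) gt0_mulye // addye; last first.
    by rewrite gt_eqF // (lt_le_trans ltNy0 s0).
  by rewrite -(fineK qfin) -EFinB -EFinM addey.
rewrite leye_eq => /eqP ->; exact: leey.
Qed.
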